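(* For all positive integers $k$ and $r$ there exists $q_0$ such that the following holds for every $q\ge q_0$. Let $\mathcal H$ be a 3-graph containing a copy $S$ of $S_q^3$, and suppose that to each of the $3q$ edges (2-subsets) $e$ contained in the hyperedges of $S$ an integer $w(e)$ with $0\le w(e)\le k$ is assigned such that $e$ is contained in at least $w(e)+1$ hyperedges of $\mathcal H$. Then some $r$ of the hyperedges of $S$ form a copy $S'$ of $S_r^3$ which is nice, i.e., for each edge $e$ contained in a hyperedge of $S'$, the link set of $e$ in $\mathcal H$ contains at least $w(e)$ vertices not belonging to $V(S')$.
   Context: $S_q^3$ denotes the 3-graph consisting of $q$ hyperedges that pairwise share exactly one common vertex (the center) and are otherwise disjoint. The link set of a pair $e=\{a,b\}$ in a 3-graph $\mathcal H$ is the set of vertices $c$ such that $\{a,b,c\}$ is a hyperedge of $\mathcal H$. *)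

(* Defs.v *)
From mathcomp Require Import all_boot.
Set Implicit Arguments. Unset Strict Implicit. Unset Printing Implicit Defensive.

Definition three_graph (V : finType) (H : {set {set V}}) : Prop :=
  forall h, h \in H -> #|h| = 3.

Definition is_star (V : finType) (q : nat) (c : V) (S : {set {set V}}) : Prop :=
  [/\ #|S| = q,
      (forall h, h \in S -> #|h| = 3),
      (forall h, h \in S -> c \in h) &
      (forall h1 h2, h1 \in S -> h2 \in S -> h1 != h2 -> h1 :&: h2 = [set c])].

Definition edge_of (V : finType) (S : {set {set V}}) (e : {set V}) : Prop :=
  #|e| = 2 /\ exists2 h, h \in S & e \subset h.

Definition vset (V : finType) (S : {set {set V}}) : {set V} :=
  \bigcup_(h in S) h.

Definition link (V : finType) (H : {set {set V}}) (e : {set V}) : {set V} :=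
  [set v | (v |: e) \in H].

Definition codeg (V : finType) (H : {set {set V}}) (e : {set V}) : nat :=
  #|[set h in H | e \subset h]|.

(* Main.v *)
Require Import Defs.
From mathcomp Require Import all_boot zify.

Lemma card_bigcup_le (T I : finType) (P : pred I) (F : I -> {set T}) :
  #|\bigcup_(i | P i) F i| <= \sum_(i | P i) #|F i|.
Proof.
elim/big_rec2: _ => [|i y s _ ih]; first by rewrite cards0.
rewrite cardsU; lia.
Qed.

Lemma exists_sub (T : finType) (A : {set T}) n : n <= #|A| ->
  exists Y : {set T}, (Y \subset A) && (#|Y| == n).
Proof.
move/card_geqP=> [s [us ss sub]]; exists [set x in s].
apply/andP; split; first by apply/subsetP=> x; rewrite inE; apply: sub.
by rewrite cardsE (card_uniqP us) ss.
Qed.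

Lemma indep (T : finType) (f : T -> {set T}) (d : nat) :
  (forall x, #|f x| <= d) -> (forall x, x \notin f x) ->
  forall n (A : {set T}), n * (2*d+1) <= #|A| ->
  exists2 B : {set T}, (B \subset A) && (#|B| == n) &
    forall x y, x \in B -> y \in B -> y \notin f x.
Proof.
move=> fd firr; elim=> [|n IH] A hA.
  by exists set0; rewrite ?sub0set ?cards0 // => x y; rewrite inE.
pose out x := A :&: f x.
pose inn x := [set y in A | x \in f y].
have dc : \sum_(x in A) #|inn x| = \sum_(x in A) #|out x|.
  have e1 x : #|inn x| = \sum_(y in A) (x \in f y).
    by rewrite -sum1dep_card /= big_mkcond /= [RHS]big_mkcond; apply: eq_bigr => y _; case: (y \in A); case: (x \in f y).
  have e2 x : #|out x| = \sum_(y in A) (y \in f x).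
    by rewrite -cardsE -sum1dep_card /= big_mkcond /= [RHS]big_mkcond; apply: eq_bigr => y _; rewrite !inE; case: (y \in A); case: (y \in f x).
  rewrite (eq_bigr _ (fun x _ => e1 x)) (eq_bigr _ (fun x _ => e2 x)).
  exact: exchange_big.
have so : \sum_(x in A) #|out x| <= \sum_(x in A) d.
  by apply: leq_sum => x _; rewrite (leq_trans (subset_leq_card (subsetIr _ _))).
rewrite sum_nat_const in so.
have [x xA xd] : exists2 x, x \in A & #|out x| + #|inn x| <= 2*d.
  case: (pickP [pred x in A | #|out x| + #|inn x| <= 2*d]) => [x /andP[]|none]; first by exists x.
  exfalso.
  have : \sum_(x in A) (2*d).+1 <= \sum_(x in A) (#|out x| + #|inn x|).
    apply: leq_sum => x xA; have := none x; rewrite /= xA /=; lia.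
  rewrite big_split /= dc sum_nat_const; lia.
pose R := x |: (out x :|: inn x).
have hR : #|R| <= 2*d+1 by rewrite cardsU1 cardsU; lia.
have hA' : n * (2*d+1) <= #|A :\: R|.
  rewrite cardsD; have := subset_leq_card (subsetIr A R); lia.
have [B' /andP[B'A /eqP cB'] indB'] := IH _ hA'.
have xR : x \in R by rewrite setU11.
have xB' : x \notin B' by apply/negP => /(subsetP B'A); rewrite inE xR.
exists (x |: B').
  apply/andP; split; last by rewrite cardsU1 xB' cB'.
  rewrite subUset sub1set xA /=; exact: subset_trans B'A (subsetDl _ _).
have yR y : y \in B' -> (y \notin f x) && (x \notin f y).
  move/(subsetP B'A); rewrite !inE; case: (y \in A); case: (y \in f x); case: (x \in f y); by rewrite ?orbT ?andbF.
move=> u v; rewrite !inE => /orP[/eqP->|uB] /orP[/eqP->|vB] //.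
- by case/andP: (yR _ vB).
- by case/andP: (yR _ uB).
- exact: indB'.
Qed.

Lemma link_codeg (V : finType) (H : {set {set V}}) (e : {set V}) :
  three_graph H -> #|e| = 2 -> codeg H e <= #|link H e|.
Proof.
move=> tg e2; rewrite /codeg.
apply: leq_trans (leq_imset_card (fun v => v |: e) (link H e)).
apply: subset_leq_card; apply/subsetP=> h; rewrite inE => /andP[hH eh].
have : #|h :\: e| == 1 by rewrite cardsD (setIidPr eh) tg // e2.
case/cards1P=> v hv.
have hve : h = v |: e by rewrite -{1}(setID h e) (setIidPr eh) hv setUC.
by apply/imsetP; exists v; rewrite // inE -hve.
Qed.

Lemma link_out (V : finType) (H : {set {set V}}) (e h : {set V}) :
  three_graph H -> #|e| = 2 -> #|h| = 3 -> e \subset h ->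
  #|link H e| - 1 <= #|link H e :\: h|.
Proof.
move=> tg e2 h3 eh.
have sub : link H e :&: h \subset h :\: e.
  apply/subsetP=> v; rewrite !inE => /andP[vl vh]; rewrite vh andbT.
  apply/negP=> ve; move: vl; rewrite (setUidPr _) ?sub1set // => /tg; rewrite e2 //.
have c1 : #|h :\: e| = 1 by rewrite cardsD (setIidPr eh) h3 e2.
have := subset_leq_card sub; rewrite c1 cardsD; lia.
Qed.

Theorem lemma2 :
  forall k r : nat, 0 < k -> 0 < r ->
  exists q0 : nat, forall q : nat, q0 <= q ->
  forall (V : finType) (H S : {set {set V}}) (c : V) (w : {set V} -> nat),
    three_graph H ->
    S \subset H ->
    is_star q c S ->
    (forall e, edge_of S e -> w e <= k /\ w e + 1 <= codeg H e) ->
    exists S' : {set {set V}},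
      [/\ S' \subset S,
          is_star r c S' &
          forall e, edge_of S' e -> w e <= #|link H e :\: vset S'|].
Proof.
move=> k r _ _; exists (r * (2 * (3 * k) + 1)) => q hq V H S c w tg SH [Sq S3 Sc Sint] hw.
pose X (h e : {set V}) := odflt set0 [pick Y : {set V} | (Y \subset link H e :\: h) && (#|Y| == w e)].
have hX (h e : {set V}) : h \in S -> e \subset h -> #|e| = 2 ->
    (X h e \subset link H e :\: h) && (#|X h e| == w e).
  move=> hS eh e2; rewrite /X; case: pickP => [Y -> //|none] /=.
  have [e1 e3] : w e <= k /\ w e + 1 <= codeg H e by apply: hw; split => //; exists h.
  have := @link_out _ _ _ _ tg e2 (S3 _ hS) eh; have := @link_codeg _ _ _ tg e2 => lc lo.
  have [Y hY] := @exists_sub _ (link H e :\: h) (w e) ltac:(lia).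
  by have := none Y; rewrite hY.
pose L (h : {set V}) := \bigcup_(e : {set V} | (e \subset h) && (#|e| == 2)) X h e.
have Lh h : h \in S -> L h :&: h = set0.
  move=> hS; apply/setP=> v; rewrite !inE; apply/negP => /andP[/bigcupP[e /andP[eh /eqP e2]]].
  by case/andP: (hX _ _ hS eh e2) => /subsetP s _ /s; rewrite !inE => /andP[/negP].
have Lk h : h \in S -> #|L h| <= 3 * k.
  move=> hS; apply: leq_trans (card_bigcup_le _ _ _ _) _.
  apply: (@leq_trans (\sum_(e : {set V} | (e \subset h) && (#|e| == 2)) k)).
    apply: leq_sum => e /andP[eh /eqP e2]; case/andP: (hX _ _ hS eh e2) => _ /eqP ->.
    by case: (hw e) => //; split => //; exists h.
  rewrite sum_nat_cond_const cards_draws (S3 _ hS) mulnC //.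
pose f h := [set h' in S | (h \in S) && (h' != h) && (L h :&: h' != set0)].
have fd h : #|f h| <= 3 * k.
  case hS : (h \in S); last first.
    by rewrite (_ : f h = set0) ?cards0 //; apply/setP=> x; rewrite !inE hS andbF.
  pose g h' := odflt c [pick v in L h :&: h'].
  have gP h' : h' \in f h -> g h' \in L h :&: h'.
    rewrite inE => /andP[_ /andP[_ /set0Pn[v vi]]]; rewrite /g; case: pickP => [u //|/(_ v)].
    by rewrite vi.
  rewrite -(@card_in_imset _ _ g); last first.
    move=> h1 h2 h1f h2f eg; apply/eqP; apply/negPn/negP => ne.
    have := gP _ h1f; have := gP _ h2f; rewrite -eg !inE => /andP[_ v2] /andP[vL v1].
    have h1S : h1 \in S by move: h1f; rewrite inE => /andP[].
    have h2S : h2 \in S by move: h2f; rewrite inE => /andP[].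
    have : g h1 \in h1 :&: h2 by rewrite inE v1 v2.
    rewrite Sint // inE => /eqP gc.
    have : g h1 \in L h :&: h by rewrite inE vL gc Sc.
    by rewrite Lh // inE.
  apply: leq_trans (Lk _ hS); apply: subset_leq_card; apply/subsetP => v /imsetP[h' /gP].
  by rewrite inE => /andP[vL _] ->.
have firr h : h \notin f h by rewrite !inE eqxx !andbF.
have [S' /andP[S'S /eqP cS'] ind] := @indep _ f (3 * k) fd firr r S ltac:(lia).
exists S'; split => //.
  split => // [h hS|h hS|h1 h2 h1S h2S]; [apply: S3|apply: Sc|apply: Sint]; by apply: (subsetP S'S).
move=> e [e2 [h hS' eh]].
have hS := subsetP S'S _ hS'.
case/andP: (hX _ _ hS eh e2) => /subsetP sub /eqP <-.
apply: subset_leq_card; apply/subsetP => v vX.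
have := sub _ vX; rewrite !inE => /andP[vh vl]; rewrite vl andbT.
apply/bigcupP => -[h' h'S vh'].
have ne : h' != h by apply/negP => /eqP eq; move: vh; rewrite -eq vh'.
have := ind _ _ hS' h'S; rewrite !inE (subsetP S'S _ h'S) hS ne /=.
apply/negP; rewrite negbK; apply/set0Pn; exists v; rewrite inE vh' andbT.
by apply/bigcupP; exists e; rewrite ?eh ?e2.
Qed.
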